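(* Let $Q$ be a quantale, $M$ a shrinkable $Q$-module, $\mathcal{F}_1,\dots,\mathcal{F}_n\in\operatorname{mF}(Q)$ and $\mathcal{F}=\mathcal{F}_1\cap\cdots\cap\mathcal{F}_n$. Let $\varphi:M_\mathcal{F}\to\prod_{k=1}^nM_{\mathcal{F}_k}$ be the $Q$-premodule map $\overline x\mapsto(\overline x,\dots,\overline x)$. Then (a) $\varphi$ is injective; (b) if $\mathcal{F}_i+\mathcal{F}_j$ is 1-step over $M$ for all $1\le i<j\le n$, then for $x_1,\dots,x_n\in M$ we have $(\overline{x_1},\dots,\overline{x_n})\in\operatorname{im}\varphi$ if and only if for all $1\le i<j\le n$ the image of $\overline{x_i}$ under $M_{\mathcal{F}_i}\to M_{\mathcal{F}_i+\mathcal{F}_j}$ equals the image of $\overline{x_j}$ under $M_{\mathcal{F}_j}\to M_{\mathcal{F}_i+\mathcal{F}_j}$.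
   Context: A quantale is a poset $Q$ in which every nonempty subset has a join $\sum$ (binary join $a+b$; no bottom required), with top $1$ and a commutative associative multiplication with unit $1$ distributing over nonempty joins. A $Q$-module is a poset $M$ with all nonempty joins and an associative unital action $Q\times M\to M$ distributing over nonempty joins in each variable; a $Q$-premodule requires only binary joins and finite distributivity. A multiplicative filter (m-filter) is a subset $\mathcal{F}\subseteq Q$ containing $1$, upward closed and closed under multiplication; $\operatorname{mF}(Q)$ is the set of them; $\mathcal{F}+\mathcal{G}$ is the smallest m-filter containing $\mathcal{F}\cup\mathcal{G}$. For $x,x_i$ write $x\le^*\sum_{i\in I}x_i$ if $x\le\sum_{i\in I_0}x_i$ for a finite nonempty $I_0\subseteq I$. $M$ is shrinkable if whenever $x\le\sum_ix_i$ there is a family $(y_j)$ with $x=\sum_jy_j$ and $y_j\le^*\sum_ix_i$ for all $j$. Localization: $a\preceq^1_\mathcal{F}b$ means there are families $(a_i)$ in $M$, $(s_i)$ in $\mathcal{F}$ with $a\le\sum_ia_i$ and $s_ia_i\le b$; $a\preceq^n_\mathcal{F}b$ means a chain of $n$ such steps through elements of $M$; $a\preceq_\mathcal{F}b$ means $a\preceq^n_\mathcal{F}b$ for some $n\ge1$. $M_\mathcal{F}=M/\!\sim$ where $a\sim b$ iff $a\preceq_\mathcal{F}b$ and $b\preceq_\mathcal{F}a$, with classes $\overline a$ ordered by $\overline a\le\overline b\iff a\preceq_\mathcal{F}b$; it is a $Q$-premodule via $\overline a+\overline b=\overline{a+b}$, $q\overline a=\overline{qa}$. For $\mathcal{F}\subseteq\mathcal{G}$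 the map $M_\mathcal{F}\to M_\mathcal{G}$, $\overline a\mapsto\overline a$, is a well-defined premodule map. $\mathcal{F}$ is localizable over $M$ if for each $b$ there is $n_b$ with $a\preceq_\mathcal{F}b\Rightarrow a\preceq^{n_b}_\mathcal{F}b$; $\mathcal{F}$ is 1-step over $M$ if it is localizable and $a\preceq_\mathcal{F}b$ implies $a\preceq^1_\mathcal{F}b$. *)

(* Defs.v *)
From Stdlib Require Import List IndefiniteDescription.
From mathcomp Require Import all_boot.

Set Implicit Arguments.
Unset Strict Implicit.
Unset Printing Implicit Defensive.

(* [qsup S] is the join of S; its value on the empty set is irrelevant.    *)
Record quantale := Quantale {
  qcar :> Type;
  qle : qcar -> qcar -> Prop;
  qle_refl : forall x, qle x x;
  qle_trans : forall x y z, qle x y -> qle y z -> qle x z;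
  qle_antisym : forall x y, qle x y -> qle y x -> x = y;
  qsup : (qcar -> Prop) -> qcar;
  qsup_ub : forall (S : qcar -> Prop) x, S x -> qle x (qsup S);
  qsup_least : forall (S : qcar -> Prop) b, (exists x, S x) ->
      (forall x, S x -> qle x b) -> qle (qsup S) b;
  qone : qcar;
  qone_top : forall x, qle x qone;
  qmul : qcar -> qcar -> qcar;
  qmulC : forall a b, qmul a b = qmul b a;
  qmulA : forall a b c, qmul a (qmul b c) = qmul (qmul a b) c;
  qmul1 : forall a, qmul qone a = a;
  qmul_sup : forall a (S : qcar -> Prop), (exists x, S x) ->
      qmul a (qsup S) = qsup (fun y => exists s, S s /\ y = qmul a s)
}.

Record qmodule (Q : quantale) := QModule {
  mcar :> Type;
  mle : mcar -> mcar -> Prop;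
  mle_refl : forall x, mle x x;
  mle_trans : forall x y z, mle x y -> mle y z -> mle x z;
  mle_antisym : forall x y, mle x y -> mle y x -> x = y;
  msup : (mcar -> Prop) -> mcar;
  msup_ub : forall (S : mcar -> Prop) x, S x -> mle x (msup S);
  msup_least : forall (S : mcar -> Prop) b, (exists x, S x) ->
      (forall x, S x -> mle x b) -> mle (msup S) b;
  act : qcar Q -> mcar -> mcar;
  actA : forall p q x, act (qmul p q) x = act p (act q x);
  act1 : forall x, act (qone Q) x = x;
  act_supr : forall q (S : mcar -> Prop), (exists x, S x) ->
      act q (msup S) = msup (fun y => exists x, S x /\ y = act q x);
  act_supl : forall (T : qcar Q -> Prop) x, (exists q, T q) ->
      act (qsup T) x = msup (fun y => exists q, T q /\ y = act q x)
}.

Arguments qle {Q} : rename.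
Arguments qsup {Q} : rename.
Arguments qone {Q} : rename.
Arguments qmul {Q} : rename.
Arguments mle {Q M} : rename.
Arguments msup {Q M} : rename.
Arguments act {Q M} : rename.

Section Loc.
Variable Q : quantale.
Variable M : qmodule Q.

Definition msupF (I : Type) (f : I -> M) : M := msup (fun y => exists i, y = f i).

Definition le_star (x : M) (I : Type) (xs : I -> M) : Prop :=
  exists l : list I, l <> nil /\
    mle x (msup (fun y => exists i, In i l /\ y = xs i)).

Definition shrinkable : Prop :=
  forall (x : M) (I : Type) (xs : I -> M), inhabited I ->
    mle x (msupF xs) ->
    exists (J : Type) (ys : J -> M), inhabited J /\ x = msupF ys /\
      forall j, le_star (ys j) xs.

Definition mfilter (F : Q -> Prop) : Prop :=
  F qone /\ (forall a b, F a -> qle a b -> F b) /\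
  (forall a b, F a -> F b -> F (qmul a b)).

Definition fplus (F G : Q -> Prop) : Q -> Prop :=
  fun q => forall H : Q -> Prop, mfilter H ->
    (forall x, F x -> H x) -> (forall x, G x -> H x) -> H q.

Definition fcap (n : nat) (Fs : 'I_n -> Q -> Prop) : Q -> Prop :=
  fun q => forall k, Fs k q.

Definition pre1 (F : Q -> Prop) (a b : M) : Prop :=
  exists (I : Type) (ai : I -> M) (si : I -> Q), inhabited I /\
    mle a (msupF ai) /\ (forall i, F (si i)) /\ (forall i, mle (act (si i) (ai i)) b).

(* a <=^n_F b : chain of n steps (n >= 1 is the meaningful case). *)
Fixpoint pren (F : Q -> Prop) (n : nat) : M -> M -> Prop :=
  match n with
  | 0 => fun a b => a = b
  | S m => fun a b => exists c, pre1 F a c /\ pren F m c b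
  end.

Definition preF (F : Q -> Prop) (a b : M) : Prop :=
  exists n, (0 < n)%N /\ pren F n a b.

Definition equivF (F : Q -> Prop) (a b : M) : Prop := preF F a b /\ preF F b a.

Definition localizable (F : Q -> Prop) : Prop :=
  forall b, exists nb, forall a, preF F a b -> pren F nb a b.

Definition one_step (F : Q -> Prop) : Prop :=
  localizable F /\ forall a b, preF F a b -> pre1 F a b.

(* The localization M_F = M / ~, as the type of equivalence classes. *)
Definition Mloc (F : Q -> Prop) : Type :=
  { P : M -> Prop | exists a, P = equivF F a }.

Definition cls (F : Q -> Prop) (a : M) : Mloc F :=
  exist _ (equivF F a) (ex_intro _ a erefl).

Definition rep (F : Q -> Prop) (c : Mloc F) : M :=
  proj1_sig (constructive_indefinite_description _ (proj2_sig c)).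

(* The canonical map M_F -> M_G, cls a |-> cls a (for F ⊆ G). *)
Definition locmap (F G : Q -> Prop) (c : Mloc F) : Mloc G := cls G (rep c).

Definition phi (n : nat) (Fs : 'I_n -> Q -> Prop) (c : Mloc (fcap Fs)) :
  forall k : 'I_n, Mloc (Fs k) := fun k => locmap (Fs k) c.

End Loc.

Arguments msupF {Q M I}.
Arguments shrinkable {Q}.
Arguments mfilter {Q}.
Arguments fplus {Q}.
Arguments fcap {Q n}.
Arguments one_step {Q}.
Arguments Mloc {Q}.
Arguments cls {Q M}.
Arguments locmap {Q M}.
Arguments phi {Q M n}.

(* Main.v *)
Require Import Defs.
From Stdlib Require Import List ProofIrrelevance FunctionalExtensionality PropExtensionality IndefiniteDescription.
From mathcomp Require Import all_boot.

Set Implicit Arguments.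
Unset Strict Implicit.

Definition qj {Q : quantale} (a b : Q) : Q := qsup (fun y => y = a \/ y = b).

Lemma qj_l {Q : quantale} (a b : Q) : qle a (qj a b).
Proof. by apply: qsup_ub; left. Qed.
Lemma qj_r {Q : quantale} (a b : Q) : qle b (qj a b).
Proof. by apply: qsup_ub; right. Qed.
Lemma qj_le {Q : quantale} (a b : Q) : qle a b -> qj a b = b.
Proof.
move=> ab; apply: qle_antisym; last exact: qj_r.
apply: qsup_least; first by exists a; left.
by move=> x [->|->] //; apply: qle_refl.
Qed.

Lemma qmul_monor {Q : quantale} (c a b : Q) : qle a b -> qle (qmul c a) (qmul c b).
Proof.
move=> ab; rewrite -(qj_le ab) /qj qmul_sup; last by exists a; left.
by apply: qsup_ub; exists a; split=> //; left.
Qed.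
Lemma qmul_monol {Q : quantale} (c a b : Q) : qle a b -> qle (qmul a c) (qmul b c).
Proof. by move=> ab; rewrite ![qmul _ c]qmulC; apply: qmul_monor. Qed.
Lemma qmul_le_l {Q : quantale} (a b : Q) : qle (qmul a b) a.
Proof.
have := qmul_monor a (qone_top b); by rewrite (qmulC a qone) qmul1.
Qed.
Lemma qmul_le_r {Q : quantale} (a b : Q) : qle (qmul a b) b.
Proof. by rewrite qmulC; apply: qmul_le_l. Qed.

Definition mj {Q : quantale} {M : qmodule Q} (a b : M) : M := msup (fun y => y = a \/ y = b).
Lemma mj_l {Q : quantale} {M : qmodule Q} (a b : M) : mle a (mj a b).
Proof. by apply: msup_ub; left. Qed.
Lemma mj_r {Q : quantale} {M : qmodule Q} (a b : M) : mle b (mj a b).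
Proof. by apply: msup_ub; right. Qed.
Lemma mj_le {Q : quantale} {M : qmodule Q} (a b : M) : mle a b -> mj a b = b.
Proof.
move=> ab; apply: mle_antisym; last exact: mj_r.
apply: msup_least; first by exists a; left.
by move=> x [->|->] //; apply: mle_refl.
Qed.

Lemma act_monor {Q : quantale} {M : qmodule Q} (q : Q) (x y : M) :
  mle x y -> mle (act q x) (act q y).
Proof.
move=> xy; rewrite -(mj_le xy) /mj act_supr; last by exists x; left.
by apply: msup_ub; exists x; split=> //; left.
Qed.
Lemma act_monol {Q : quantale} {M : qmodule Q} (p q : Q) (x : M) :
  qle p q -> mle (act p x) (act q x).
Proof.
move=> pq; rewrite -(qj_le pq) /qj act_supl; last by exists p; left.
by apply: msup_ub; exists p; split=> //; left.
Qed.
Lemma act_le {Q : quantale} {M : qmodule Q} (q : Q) (x : M) : mle (act q x) x.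
Proof. by rewrite -{2}(act1 x); apply: act_monol; apply: qone_top. Qed.

Lemma msup_mono {Q : quantale} {M : qmodule Q} (S T : M -> Prop) :
  (exists x, S x) -> (forall x, S x -> exists y, T y /\ mle x y) -> mle (msup S) (msup T).
Proof.
move=> ne H; apply: msup_least => // x /H [y [Ty xy]].
by apply: mle_trans xy _; apply: msup_ub.
Qed.

Lemma mf1 {Q : quantale} (F : Q -> Prop) : mfilter F -> F qone.
Proof. by case. Qed.
Lemma mfup {Q : quantale} (F : Q -> Prop) a b : mfilter F -> F a -> qle a b -> F b.
Proof. by case=> _ [H _]; apply: H. Qed.
Lemma mfmul {Q : quantale} (F : Q -> Prop) a b : mfilter F -> F a -> F b -> F (qmul a b).
Proof. by case=> _ [_ H]; apply: H. Qed.
Lemma mf_cap {Q : quantale} (F G : Q -> Prop) : mfilter F -> mfilter G ->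
  mfilter (fun q => F q /\ G q).
Proof.
move=> hF hG; split; first by split; apply: mf1.
split; first by move=> a b [Fa Ga] ab; split; [apply: mfup hF Fa ab|apply: mfup hG Ga ab].
by move=> a b [Fa Ga] [Fb Gb]; split; apply: mfmul.
Qed.

Definition E2 {Q : quantale} (F G : Q -> Prop) : Q -> Prop :=
  fun u => exists f g, F f /\ G g /\ qle (qmul f g) u.

Lemma E2_filter {Q : quantale} (F G : Q -> Prop) : mfilter F -> mfilter G -> mfilter (E2 F G).
Proof.
move=> hF hG; split.
  exists qone, qone; split; first exact: mf1.
  split; first exact: mf1. by apply: qone_top.
split.
  move=> a b [f [g [Ff [Gg le]]]] ab; exists f, g; do 2!split=> //.
  exact: qle_trans le ab.
move=> a b [f [g [Ff [Gg le]]]] [f' [g' [Ff' [Gg' le']]]].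
exists (qmul f f'), (qmul g g'); split; first exact: mfmul.
split; first exact: mfmul.
have -> : qmul (qmul f f') (qmul g g') = qmul (qmul f g) (qmul f' g').
  by rewrite -!qmulA; congr qmul; rewrite !qmulA (qmulC f' g).
apply: qle_trans (qmul_monol _ le) _; exact: qmul_monor.
Qed.

Lemma E2C {Q : quantale} (F G : Q -> Prop) u : E2 F G u -> E2 G F u.
Proof. by move=> [f [g [? [? ?]]]]; exists g, f; rewrite qmulC. Qed.

Lemma fplus_E2 {Q : quantale} (F G : Q -> Prop) u : mfilter F -> mfilter G ->
  fplus F G u -> E2 F G u.
Proof.
move=> hF hG H; apply: H; first exact: E2_filter.
  move=> x Fx; exists x, qone; split=> //; split; first exact: mf1.
  by rewrite qmulC qmul1; apply: qle_refl.
move=> x Gx; exists qone, x; split; first exact: mf1; split=> //.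
by rewrite qmul1; apply: qle_refl.
Qed.

Lemma fplus_l {Q : quantale} (F G : Q -> Prop) u : F u -> fplus F G u.
Proof. by move=> Fu H _ HF _; apply: HF. Qed.
Lemma fplus_r {Q : quantale} (F G : Q -> Prop) u : G u -> fplus F G u.
Proof. by move=> Fu H _ _ HG; apply: HG. Qed.
Lemma fplus1 {Q : quantale} (F G : Q -> Prop) : fplus F G qone.
Proof. by move=> H hH _ _; apply: mf1. Qed.

Definition W {Q : quantale} {M : qmodule Q} (H : Q -> Prop) (c : M) : M -> Prop :=
  fun w => exists s, H s /\ mle (act s w) c.

Lemma W_mono {Q : quantale} {M : qmodule Q} (H : Q -> Prop) (c c' w : M) :
  W H c w -> mle c c' -> W H c' w.
Proof. by move=> [s [Hs le]] cc; exists s; split=> //; apply: mle_trans le cc. Qed.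

Lemma pre1_fw {Q : quantale} {M : qmodule Q} (H : Q -> Prop) (x c : M) :
  pre1 H x c -> (exists w, W H c w) /\ mle x (msup (W H c)).
Proof.
case=> I [ai [si [[i0] [le [Hs Hle]]]]]; split; first by exists (ai i0), (si i0).
apply: mle_trans le _; apply: msup_mono; first by exists (ai i0), i0.
by move=> y [i ->]; exists (ai i); split; [exists (si i) | apply: mle_refl].
Qed.

Lemma pre1_bw {Q : quantale} {M : qmodule Q} (H : Q -> Prop) (x c : M) :
  (exists w, W H c w) -> mle x (msup (W H c)) -> pre1 H x c.
Proof.
move=> [w0 Hw0] le.
exists {w | W H c w}, (@proj1_sig _ _),
  (fun i => proj1_sig (@constructive_indefinite_description Q
     (fun s => H s /\ mle (act s (proj1_sig i)) c) (proj2_sig i))).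
split; first exact: (inhabits (exist _ w0 Hw0)).
split.
  apply: mle_trans le _; apply: msup_mono; first by exists w0.
  move=> y Wy; exists y; split; last exact: mle_refl.
  by exists (exist _ y Wy).
split=> i; case: (constructive_indefinite_description _ _) => s [Hs le'] //.
Qed.

Definition Cov {Q : quantale} {M : qmodule Q} (A : M -> Prop) (y : M) : Prop :=
  (exists w, mle w y /\ A w) /\ mle y (msup (fun w => mle w y /\ A w)).

Lemma Cov_self {Q : quantale} {M : qmodule Q} (A : M -> Prop) (y : M) : A y -> Cov A y.
Proof.
move=> Ay; split; first by exists y; split=> //; apply: mle_refl.
by apply: msup_ub; split=> //; apply: mle_refl.
Qed.

Lemma Cov_bind {Q : quantale} {M : qmodule Q} (A B : M -> Prop) (y : M) :
  Cov A y -> (forall w, mle w y -> A w -> Cov B w) -> Cov B y.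
Proof.
move=> [[w0 [w0y Aw0]] le] H; split.
  have [[v [vw Bv]] _] := H w0 w0y Aw0.
  by exists v; split=> //; apply: mle_trans vw w0y.
apply: mle_trans le _; apply: msup_least; first by exists w0.
move=> w [wy Aw]; have [_ le'] := H w wy Aw.
apply: mle_trans le' _; apply: msup_least.
  by have [[v [vw Bv]] _] := H w wy Aw; exists v.
move=> v [vw Bv]; apply: msup_ub; split=> //; exact: mle_trans vw wy.
Qed.

Lemma Cov_mono {Q : quantale} {M : qmodule Q} (A B : M -> Prop) (y : M) :
  Cov A y -> (forall w, mle w y -> A w -> B w) -> Cov B y.
Proof. by move=> C H; apply: Cov_bind C _ => w wy Aw; apply: Cov_self; apply: H. Qed.

Lemma Cov_pre1 {Q : quantale} {M : qmodule Q} (H : Q -> Prop) (y b : M) :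
  Cov (W H b) y -> pre1 H y b.
Proof.
move=> [[w [wy Ww]] le]; apply: pre1_bw; first by exists w.
apply: mle_trans le _; apply: msup_mono; first by exists w.
by move=> v [_ Wv]; exists v; split=> //; apply: mle_refl.
Qed.

Lemma pre1_le {Q : quantale} {M : qmodule Q} (H : Q -> Prop) (x y : M) :
  H qone -> mle x y -> pre1 H x y.
Proof.
move=> H1 xy; have Wx : W H y x by exists qone; rewrite act1.
by apply: pre1_bw; [exists x | apply: msup_ub].
Qed.

Lemma pre1_monoL {Q : quantale} {M : qmodule Q} (H : Q -> Prop) (x x' y : M) :
  mle x x' -> pre1 H x' y -> pre1 H x y.
Proof. by move=> xx /pre1_fw [ne le]; apply: pre1_bw ne (mle_trans xx le). Qed.

Lemma pre1_monoR {Q : quantale} {M : qmodule Q} (H : Q -> Prop) (x y y' : M) :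
  pre1 H x y -> mle y y' -> pre1 H x y'.
Proof.
move=> /pre1_fw [[w0 Hw0] le] yy; apply: pre1_bw.
  by exists w0; apply: W_mono yy.
apply: mle_trans le _; apply: msup_mono; first by exists w0.
by move=> w Ww; exists w; split; [apply: W_mono yy | apply: mle_refl].
Qed.

Lemma pre1_monoF {Q : quantale} {M : qmodule Q} (H H' : Q -> Prop) (x y : M) :
  (forall q, H q -> H' q) -> pre1 H x y -> pre1 H' x y.
Proof.
move=> HH [I [ai [si [ne [le [Hs Hle]]]]]]; exists I, ai, si; do 3!split=> //.
by move=> i; apply: HH.
Qed.

Lemma act_comm {Q : quantale} {M : qmodule Q} (p q : Q) (x : M) :
  act p (act q x) = act q (act p x).
Proof. by rewrite -!actA qmulC. Qed.

Lemma pre1_act {Q : quantale} {M : qmodule Q} (H : Q -> Prop) (q : Q) (x y : M) :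
  pre1 H x y -> pre1 H (act q x) (act q y).
Proof.
move=> /pre1_fw [[w0 [s0 [Hs0 le0]]] le]; apply: pre1_bw.
  exists (act q w0), s0; split=> //; rewrite act_comm; exact: act_monor.
apply: mle_trans (act_monor q le) _; rewrite act_supr; last by exists w0; exists s0.
apply: msup_least; first by exists (act q w0); exists w0; split=> //; exists s0.
move=> z [w [[s [Hs le']] ->]]; apply: msup_ub; exists s; split=> //.
by rewrite act_comm; apply: act_monor.
Qed.

Fixpoint Pc {Q : quantale} {M : qmodule Q} (H : Q -> Prop) (k : nat) (x b : M) : Prop :=
  match k with
  | 0 => mle x b
  | S k => exists c, pre1 H x c /\ Pc H k c b
  end.

Lemma P_monoL {Q : quantale} {M : qmodule Q} (H : Q -> Prop) k (x x' b : M) :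
  mle x x' -> Pc H k x' b -> Pc H k x b.
Proof.
case: k => [|k] /= xx; first exact: mle_trans.
by move=> [c [p Pcb]]; exists c; split=> //; apply: pre1_monoL p.
Qed.

Lemma P_monoR {Q : quantale} {M : qmodule Q} (H : Q -> Prop) k (x b b' : M) :
  Pc H k x b -> mle b b' -> Pc H k x b'.
Proof.
elim: k x => [|k IH] x /=; first by move=> h1 h2; exact: mle_trans h1 h2.
by move=> [c [p Pcb]] bb; exists c; split=> //; apply: IH.
Qed.

Lemma P_monoF {Q : quantale} {M : qmodule Q} (H H' : Q -> Prop) k (x b : M) :
  (forall q, H q -> H' q) -> Pc H k x b -> Pc H' k x b.
Proof.
move=> HH; elim: k x => [|k IH] x //=.
by move=> [c [p Pcb]]; exists c; split; [apply: pre1_monoF p | apply: IH].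
Qed.

Lemma P_act {Q : quantale} {M : qmodule Q} (H : Q -> Prop) q k (x b : M) :
  Pc H k x b -> Pc H k (act q x) (act q b).
Proof.
elim: k x => [|k IH] x /=; first exact: act_monor.
by move=> [c [p Pcb]]; exists (act q c); split; [apply: pre1_act | apply: IH].
Qed.

Lemma P_le {Q : quantale} {M : qmodule Q} (H : Q -> Prop) k (x b : M) :
  H qone -> mle x b -> Pc H k x b.
Proof.
move=> H1; elim: k x => [|k IH] x //= xb.
by exists x; split; [apply: pre1_le; last apply: mle_refl | apply: IH].
Qed.

Lemma P_S {Q : quantale} {M : qmodule Q} (H : Q -> Prop) k (x b : M) :
  H qone -> Pc H k x b -> Pc H k.+1 x b.
Proof. by move=> H1 P; exists x; split=> //; apply: pre1_le; last apply: mle_refl. Qed.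

Lemma P_add {Q : quantale} {M : qmodule Q} (H : Q -> Prop) k m (x b : M) :
  H qone -> Pc H k x b -> Pc H (k + m) x b.
Proof.
move=> H1 P; elim: m => [|m IH]; first by rewrite addn0.
by rewrite addnS; apply: P_S.
Qed.

Lemma P_join {Q : quantale} {M : qmodule Q} (H : Q -> Prop) k (S : M -> Prop) (b : M) :
  (exists y, S y) -> (forall y, S y -> Pc H k y b) -> Pc H k (msup S) b.
Proof.
elim: k S => [|k IH] S ne HS /=; first exact: msup_least.
pose T := fun c => (exists y, S y /\ pre1 H y c) /\ Pc H k c b.
exists (msup T); split; last first.
  apply: IH.
    by case: ne => y Sy; case: (HS y Sy) => c [p P]; exists c; split=> //; exists y.
  by move=> c [_ P].
have Tsub : forall c, T c -> mle c (msup T) by move=> c Tc; apply: msup_ub.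
case: ne => y0 Sy0; case: (HS y0 Sy0) => c0 [p0 P0].
have Tc0 : T c0 by split=> //; exists y0.
apply: pre1_bw.
  case: (pre1_fw p0) => [[w Ww] _]; exists w; apply: W_mono Ww (Tsub _ Tc0).
apply: msup_least; first by exists y0.
move=> y Sy; case: (HS y Sy) => c [p P].
have Tc : T c by split=> //; exists y.
case: (pre1_fw p) => [[w Ww] le]; apply: mle_trans le _.
apply: msup_mono; first by exists w.
by move=> v Wv; exists v; split; [apply: W_mono Wv (Tsub _ Tc) | apply: mle_refl].
Qed.

Lemma P_Cov {Q : quantale} {M : qmodule Q} (H : Q -> Prop) k (A : M -> Prop) (y b : M) :
  Cov A y -> (forall w, mle w y -> A w -> Pc H k w b) -> Pc H k y b.
Proof.
move=> [[w0 [w0y Aw0]] le] HP; apply: P_monoL le _; apply: P_join.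
  by exists w0.
by move=> w [wy Aw]; apply: HP.
Qed.

Lemma pren_P {Q : quantale} {M : qmodule Q} (H : Q -> Prop) k (x b : M) :
  pren H k x b -> Pc H k x b.
Proof.
elim: k x => [|k IH] x /=; first by move=> ->; apply: mle_refl.
by move=> [c [p P]]; exists c; split=> //; apply: IH.
Qed.

Lemma P_pren {Q : quantale} {M : qmodule Q} (H : Q -> Prop) k (x b : M) :
  H qone -> Pc H k x b -> pren H k.+1 x b.
Proof.
move=> H1; elim: k x => [|k IH] x /=.
  by move=> xb; exists b; split=> //; apply: pre1_le.
by move=> [c [p P]]; exists c; split=> //; apply: IH.
Qed.

Lemma pren_cat {Q : quantale} {M : qmodule Q} (H : Q -> Prop) n m (x c b : M) :
  pren H n x c -> pren H m c b -> pren H (n + m) x b.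
Proof.
elim: n x => [|n IH] x /=; first by move=> ->.
by move=> [d [p P]] P'; exists d; split=> //; apply: IH P P'.
Qed.

Lemma pren_monoF {Q : quantale} {M : qmodule Q} (H H' : Q -> Prop) k (x b : M) :
  (forall q, H q -> H' q) -> pren H k x b -> pren H' k x b.
Proof.
move=> HH; elim: k x => [|k IH] x //=.
by move=> [c [p P]]; exists c; split; [apply: pre1_monoF p | apply: IH].
Qed.

Lemma preF_P {Q : quantale} {M : qmodule Q} (H : Q -> Prop) (x b : M) :
  preF H x b -> exists k, Pc H k x b.
Proof. by move=> [k [_ P]]; exists k; apply: pren_P. Qed.

Lemma P_preF {Q : quantale} {M : qmodule Q} (H : Q -> Prop) k (x b : M) :
  H qone -> Pc H k x b -> preF H x b.
Proof. by move=> H1 P; exists k.+1; split=> //; apply: P_pren. Qed.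

Lemma pre1_preF {Q : quantale} {M : qmodule Q} (H : Q -> Prop) (x b : M) :
  pre1 H x b -> preF H x b.
Proof. by move=> p; exists 1; split=> //; exists b. Qed.

Lemma preF_refl {Q : quantale} {M : qmodule Q} (H : Q -> Prop) (x : M) :
  H qone -> preF H x x.
Proof. by move=> H1; apply: pre1_preF; apply: pre1_le; last apply: mle_refl. Qed.

Lemma preF_trans {Q : quantale} {M : qmodule Q} (H : Q -> Prop) (x c b : M) :
  preF H x c -> preF H c b -> preF H x b.
Proof.
move=> [n [n0 P]] [m [m0 P']]; exists (n + m); split; last exact: pren_cat P P'.
by rewrite addn_gt0 n0.
Qed.

Lemma preF_monoF {Q : quantale} {M : qmodule Q} (H H' : Q -> Prop) (x b : M) :
  (forall q, H q -> H' q) -> preF H x b -> preF H' x b.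
Proof. by move=> HH [n [n0 P]]; exists n; split=> //; apply: pren_monoF P. Qed.

Lemma eqF_refl {Q : quantale} {M : qmodule Q} (H : Q -> Prop) (x : M) :
  H qone -> equivF H x x.
Proof. by move=> H1; split; apply: preF_refl. Qed.
Lemma eqF_sym {Q : quantale} {M : qmodule Q} (H : Q -> Prop) (x y : M) :
  equivF H x y -> equivF H y x.
Proof. by case. Qed.
Lemma eqF_trans {Q : quantale} {M : qmodule Q} (H : Q -> Prop) (x y z : M) :
  equivF H x y -> equivF H y z -> equivF H x z.
Proof. by move=> [a b] [c d]; split; [apply: preF_trans a c | apply: preF_trans d b]. Qed.
Lemma eqF_monoF {Q : quantale} {M : qmodule Q} (H H' : Q -> Prop) (x y : M) :
  (forall q, H q -> H' q) -> equivF H x y -> equivF H' x y.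
Proof. by move=> HH [a b]; split; apply: preF_monoF HH _. Qed.

Lemma cls_eq {Q : quantale} {M : qmodule Q} (H : Q -> Prop) (a b : M) :
  H qone -> equivF H a b -> cls H a = cls H b.
Proof.
move=> H1 ab; apply: eq_sig_hprop; first by move=> ? ? ?; apply: proof_irrelevance.
rewrite /=; apply: functional_extensionality => y; apply: propositional_extensionality.
split=> h; first exact: eqF_trans (eqF_sym ab) h.
exact: eqF_trans ab h.
Qed.

Lemma cls_inv {Q : quantale} {M : qmodule Q} (H : Q -> Prop) (a b : M) :
  H qone -> cls H a = cls H b -> equivF H a b.
Proof.
move=> H1 e; have := f_equal (@proj1_sig _ _) e => /= e'.
by rewrite e'; apply: eqF_refl.
Qed.

Lemma rep_spec {Q : quantale} {M : qmodule Q} (H : Q -> Prop) (c : Mloc M H) :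
  proj1_sig c = equivF H (rep c).
Proof.
rewrite /rep; case: (constructive_indefinite_description _ _) => a /= e; done.
Qed.

Lemma rep_cls {Q : quantale} {M : qmodule Q} (H : Q -> Prop) (c : Mloc M H) :
  H qone -> cls H (rep c) = c.
Proof.
move=> H1; apply: eq_sig_hprop; first by move=> ? ? ?; apply: proof_irrelevance.
by rewrite /= -rep_spec.
Qed.

Lemma rep_cls_eq {Q : quantale} {M : qmodule Q} (H : Q -> Prop) (a : M) :
  H qone -> equivF H (rep (cls H a)) a.
Proof.
move=> H1; have := rep_spec (cls H a); rewrite /= => e.
by rewrite -e; apply: eqF_refl.
Qed.

Fixpoint lprod {Q : quantale} {I : Type} (si : I -> Q) (l : list I) : Q :=
  match l with nil => qone | cons i l => qmul (si i) (lprod si l) end.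

Lemma lprod_F {Q : quantale} {I : Type} (H : Q -> Prop) (si : I -> Q) l :
  mfilter H -> (forall i, H (si i)) -> H (lprod si l).
Proof.
move=> hH Hs; elim: l => [|i l IH] /=; first exact: mf1.
exact: mfmul.
Qed.

Lemma lprod_le {Q : quantale} {I : Type} (si : I -> Q) l i :
  In i l -> qle (lprod si l) (si i).
Proof.
elim: l => [|j l IH] //= [->|h]; first exact: qmul_le_l.
exact: qle_trans (qmul_le_r _ _) (IH h).
Qed.

Lemma shrink {Q : quantale} {M : qmodule Q} (H : Q -> Prop) (x c : M) :
  shrinkable M -> mfilter H -> pre1 H x c -> Cov (W H c) x.
Proof.
move=> Hshr hH [I [ai [si [[i0] [le [Hs Hle]]]]]].
have [J [ys [[j0] [ex Hy]]]] := Hshr x I ai (inhabits i0) le.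
have good : forall j, W H c (ys j).
  move=> j; case: (Hy j) => l [lnil lej].
  exists (lprod si l); split; first exact: lprod_F.
  apply: mle_trans (act_monor _ lej) _.
  rewrite act_supr; last first.
    by case: l lnil {lej} => [|i l] // _; exists (ai i), i; split=> //; left.
  apply: msup_least.
    by case: l lnil {lej} => [|i l] // _; exists (act (lprod si (i :: l)) (ai i)), (ai i);
      split=> //; exists i; split=> //; left.
  move=> z [y [[i [il ->]] ->]].
  apply: mle_trans (Hle i); apply: act_monol; exact: lprod_le.
split.
  by exists (ys j0); split; [rewrite ex; apply: msup_ub; exists j0 | apply: good].
rewrite {1}ex; apply: msup_least; first by exists (ys j0), j0.
move=> y [j ->]; apply: msup_ub; split; last exact: good.
by rewrite ex; apply: msup_ub; exists j.
Qed.

Lemma two_filters {Q : quantale} {M : qmodule Q} (F G : Q -> Prop) :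
  shrinkable M -> mfilter F -> mfilter G ->
  forall N n m (x b : M), (n + m <= N)%N -> Pc F n x b -> Pc G m x b ->
    Pc (fun q => F q /\ G q) (n + m) x b.
Proof.
move=> Hshr hF hG.
have FG1 : F qone /\ G qone by split; apply: mf1.
elim=> [|N IH] n m x b.
  case: n => [|n] //; case: m => [|m] // _ xb _; exact: P_le.
case: n => [|n'] nm; first by move=> xb _; apply: P_le.
case: m nm => [|m'] nm; first by move=> _ xb; apply: P_le.
move=> PF PG; have PF' := PF; have PG' := PG.
case: PF' => c [pc Pc']; case: PG' => d [pd Pd'].
have C1 := shrink Hshr hF pc.
refine (P_Cov C1 _).
move=> w wx [s [Fs sw]].
idtac.
refine (P_Cov (shrink Hshr hG (pre1_monoL wx pd)) _) => v vw [t [Gt tv]].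
rewrite addSn /=.
exists (mj (act s v) (act t v)); split.
  apply: Cov_pre1; apply: Cov_self; exists (qj s t); split.
    by split; [apply: mfup hF Fs (qj_l _ _) | apply: mfup hG Gt (qj_r _ _)].
  rewrite /qj act_supl; last by exists s; left.
  apply: msup_least; first by exists (act s v), s; split=> //; left.
  by move=> y [q [[->|->] ->]]; [apply: mj_l | apply: mj_r].
apply: P_join; first by exists (act s v); left.
move=> y [->|->].
  apply: IH; first by rewrite addSn ltnS in nm.
    by apply: P_monoL Pc'; apply: mle_trans (act_monor _ vw) sw.
  apply: P_monoL (act_monor s (mle_trans vw wx)) _.
  apply: P_monoR (act_le s b); exact: P_act.
rewrite -addSnnS; apply: IH; first by rewrite addSnnS; rewrite addSn ltnS in nm.
  apply: P_monoL (act_monor t (mle_trans vw wx)) _.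
  apply: P_monoR (act_le t b); exact: P_act.
exact: P_monoL tv Pd'.
Qed.

Lemma in_In {T : eqType} (x : T) (s : seq T) : x \in s -> In x s.
Proof.
elim: s => [|y s IH]; first by rewrite in_nil.
rewrite in_cons => /orP [/eqP ->|h]; [by left | right; exact: IH].
Qed.

Lemma all_In n (k : 'I_n) : In k (enum 'I_n).
Proof. by apply: in_In; rewrite mem_enum. Qed.

Lemma mf_all {Q : quantale} n (Fs : 'I_n -> Q -> Prop) (L : list 'I_n) :
  (forall k, mfilter (Fs k)) -> mfilter (fun q => forall k, In k L -> Fs k q).
Proof.
move=> hF; split; first by move=> k _; apply: mf1.
split; first by move=> a b h ab k kL; apply: mfup (h k kL) ab.
by move=> a b ha hb k kL; apply: mfmul; [apply: hF | apply: ha | apply: hb].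
Qed.

Lemma cap_preF {Q : quantale} {M : qmodule Q} n (Fs : 'I_n -> Q -> Prop) (a b : M) :
  shrinkable M -> (0 < n)%N -> (forall k, mfilter (Fs k)) ->
  (forall k, preF (Fs k) a b) -> preF (fcap Fs) a b.
Proof.
move=> Hshr n0 hF H.
pose k0 := Ordinal n0.
have main : forall L, exists N, Pc (fun q => Fs k0 q /\ forall k, In k L -> Fs k q) N a b.
  elim=> [|j L [N P]].
    case: (preF_P (H k0)) => N P; exists N; apply: P_monoF P => q h; split=> //.
  case: (preF_P (H j)) => m Pj.
  have := two_filters Hshr (hF j) (mf_cap (hF k0) (mf_all L hF)) (leqnn (m + N)) Pj P.
  move=> P'; exists (m + N); apply: P_monoF P' => q [Fj [F0 FL]]; split=> //.
  by move=> k [<-|kL] //; apply: FL.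
case: (main (enum 'I_n)) => N P; apply: (@P_preF _ _ _ N).
  by move=> k; apply: mf1.
by apply: P_monoF P => q [_ h] k; apply: h; apply: all_In.
Qed.

Lemma Dlem {Q : quantale} {M : qmodule Q} n (Fs : 'I_n -> Q -> Prop) (xs : 'I_n -> M) k :
  shrinkable M -> (forall j, mfilter (Fs j)) ->
  (forall j, pre1 (E2 (Fs k) (Fs j)) (xs k) (xs j)) ->
  forall L y, mle y (xs k) ->
  Cov (fun w => exists s, Fs k s /\ forall j, In j L -> pre1 (Fs j) (act s w) (xs j)) y.
Proof.
move=> Hshr hF Hj; elim=> [|j L IH] y yk.
  by apply: Cov_self; exists qone; split=> //; apply: mf1.
refine (Cov_bind (IH y yk) _) => w wy [s [Fks Hs]].
refine (Cov_mono (shrink Hshr (E2_filter (hF k) (hF j))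
          (pre1_monoL (mle_trans wy yk) (Hj j))) _).
move=> v vw [u [[f [g [Ff [Gg fgu]]]] uv]].
exists (qmul s f); split; first exact: mfmul.
move=> j' [<-|inL].
  apply: Cov_pre1; apply: Cov_self; exists g; split=> //.
  rewrite -actA; apply: mle_trans uv; apply: act_monol.
  apply: qle_trans (qmul_monor g (qmul_le_r s f)) _.
  by rewrite qmulC.
apply: pre1_monoL (Hs j' inL); rewrite actA; apply: act_monor.
exact: mle_trans (act_le f v) vw.
Qed.

Lemma pre1_join {Q : quantale} {M : qmodule Q} (H : Q -> Prop) (S : M -> Prop) (b : M) :
  (exists y, S y) -> (forall y, S y -> pre1 H y b) -> pre1 H (msup S) b.
Proof.
move=> ne HS; have : Pc H 1 (msup S) b.
  apply: P_join ne _ => y Sy; exists b; split; [exact: HS | exact: mle_refl].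
by move=> [c [p cb]]; apply: pre1_monoR p cb.
Qed.

Lemma eqF_fl {Q : quantale} {M : qmodule Q} (F G : Q -> Prop) (x y : M) :
  equivF F x y -> equivF (fplus F G) x y.
Proof. by apply: eqF_monoF => q h; apply: fplus_l. Qed.
Lemma eqF_fr {Q : quantale} {M : qmodule Q} (F G : Q -> Prop) (x y : M) :
  equivF G x y -> equivF (fplus F G) x y.
Proof. by apply: eqF_monoF => q h; apply: fplus_r. Qed.

Theorem mainTheorem5 (Q : quantale) (M : qmodule Q) (n : nat)
  (Fs : 'I_n -> Q -> Prop) :
  shrinkable M -> (0 < n)%N -> (forall k, mfilter (Fs k)) ->
  injective (@phi Q M n Fs) /\
  ((forall i j : 'I_n, (i < j)%N -> one_step M (fplus (Fs i) (Fs j))) ->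
   forall xs : 'I_n -> M,
     (exists c : Mloc M (fcap Fs), phi Fs c = (fun k => cls (Fs k) (xs k))) <->
     (forall i j : 'I_n, (i < j)%N ->
        locmap (Fs i) (fplus (Fs i) (Fs j)) (cls (Fs i) (xs i)) =
        locmap (Fs j) (fplus (Fs i) (Fs j)) (cls (Fs j) (xs j)))).
Proof.
move=> Hshr n0 hF.
have F1 : forall k, Fs k qone by move=> k; apply: mf1.
have cap1 : fcap Fs qone by move=> k.
have capsub : forall k q, fcap Fs q -> Fs k q by move=> k q h.
split.
  move=> c c' e.
  have ek : forall k, equivF (Fs k) (rep c) (rep c').
    by move=> k; have := f_equal (fun f => f k) e => /= e'; apply: cls_inv e'.
  rewrite -(rep_cls c cap1) -(rep_cls c' cap1); apply: cls_eq => //.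
  by split; apply: cap_preF => // k; case: (ek k).
move=> Hos xs; split.
  move=> [c e] i j ij.
  have ek : forall k, equivF (Fs k) (rep c) (xs k).
    by move=> k; have := f_equal (fun f => f k) e => /= e'; apply: cls_inv e'.
  rewrite /locmap; apply: cls_eq; first exact: fplus1.
  apply: eqF_trans (_ : equivF _ _ (rep c)) _.
    apply: eqF_fl.
    exact: eqF_trans (rep_cls_eq _ (F1 i)) (eqF_sym (ek i)).
  apply: eqF_fr.
  exact: eqF_trans (ek j) (eqF_sym (rep_cls_eq _ (F1 j))).
move=> Hyp.
have eq_ij : forall i j : 'I_n, (i < j)%N -> equivF (fplus (Fs i) (Fs j)) (xs i) (xs j).
  move=> i j ij; have := Hyp i j ij; rewrite /locmap => e.
  have e' : equivF (fplus (Fs i) (Fs j)) (rep (cls (Fs i) (xs i))) (rep (cls (Fs j) (xs j))).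
    by apply: cls_inv e; apply: fplus1.
  apply: eqF_trans (eqF_sym (eqF_fl (Fs j) (rep_cls_eq _ (F1 i)))) _.
  apply: eqF_trans e' _.
  exact: eqF_fr (rep_cls_eq _ (F1 j)).
have Hp : forall i j, pre1 (E2 (Fs i) (Fs j)) (xs i) (xs j).
  move=> i j; case: (ltngtP i j) => ij.
  - have [e1 _] := eq_ij i j ij.
    apply: pre1_monoF (fun q => fplus_E2 (hF i) (hF j)) _.
    by apply: (proj2 (Hos i j ij)).
  - have [_ e1] := eq_ij j i ij.
    apply: pre1_monoF (fun q h => E2C (fplus_E2 (hF j) (hF i) h)) _.
    by apply: (proj2 (Hos j i ij)).
  - have eij : i = j by apply: ord_inj.
    subst j; apply: pre1_le; last exact: mle_refl.
    exists qone, qone; split=> //; split=> //; rewrite qmul1; exact: qle_refl.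
pose Good := fun w => forall j, pre1 (Fs j) w (xs j).
pose x := msup Good.
have Cv : forall k, Cov (fun w => exists s, Fs k s /\
    forall j, In j (enum 'I_n) -> pre1 (Fs j) (act s w) (xs j)) (xs k).
  by move=> k; apply: (Dlem Hshr hF (Hp k)); apply: mle_refl.
have ne : exists w, Good w.
  case: (Cv (Ordinal n0)) => [[w [_ [s [_ h]]]] _].
  by exists (act s w) => j; apply: h; apply: all_In.
have ex_k : forall k, equivF (Fs k) x (xs k).
  move=> k; split; apply: pre1_preF.
    by apply: pre1_join ne _ => y Gy; apply: Gy.
  apply: Cov_pre1; apply: Cov_mono (Cv k) _ => w _ [s [Fks h]].
  exists s; split=> //; apply: msup_ub => j; apply: h; apply: all_In.
exists (cls (fcap Fs) x); apply: functional_extensionality_dep => k.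
rewrite /phi /locmap; apply: cls_eq; first exact: F1.
apply: eqF_trans (ex_k k).
exact: eqF_monoF (capsub k) (rep_cls_eq _ cap1).
Qed.
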